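(* Let $G$ be a graph of maximum degree at most $3$. Then $G$ has a matching $M$ such that the multigraph $G/M$ obtained by contracting all edges of $M$ (keeping parallel edges) is bipartite. *)

(* Defs.v *)
From mathcomp Require Import all_boot.
Set Implicit Arguments. Unset Strict Implicit. Unset Printing Implicit Defensive.

Section Graphs.
Variable T : finType.

Definition simple_graph (e : rel T) : Prop := symmetric e /\ irreflexive e.

Definition nbhd (e : rel T) (x : T) : {set T} := [set y | e x y].
Definition max_degree_le (e : rel T) (k : nat) : Prop :=
  forall x, #|nbhd e x| <= k.

Definition is_edge (e : rel T) (S : {set T}) : Prop :=
  exists u v, e u v /\ S = [set u; v].

Definition is_matching (e : rel T) (M : {set {set T}}) : Prop :=
  (forall S, S \in M -> is_edge e S) /\
  (forall S1 S2, S1 \in M -> S2 \in M -> S1 != S2 -> [disjoint S1 & S2]).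

(* vertex of G/M containing x: x together with everything joined to x by
   an edge of M (for a matching this is the M-contraction class of x) *)
Definition blk (M : {set {set T}}) (x : T) : {set T} :=
  x |: \bigcup_(S in M | x \in S) S.

(* G/M is the multigraph whose vertices are the classes blk M x and which has,
   for every edge uv of G not in M, an edge between blk M u and blk M v
   (parallel edges kept; an edge with blk M u = blk M v would be a loop).
   G/M is bipartite iff its vertices can be 2-coloured so that every edge
   has differently coloured ends (a loop makes this impossible). *)
Definition contraction_bipartite (e : rel T) (M : {set {set T}}) : Prop :=
  exists col : {set T} -> bool,
    forall u v, e u v -> [set u; v] \notin M -> col (blk M u) != col (blk M v).

End Graphs.

(* Main.v *)
Require Import Defs.
From mathcomp Require Import all_boot.
From mathcomp Require Import zify.
Set Implicit Arguments. Unset Strict Implicit.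

Definition fs (T : finType) (e : rel T) (A : {set T}) (u v : T) : bool :=
  e u v && ((u \in A) == (v \in A)).

Definition mono (T : finType) (e : rel T) (A : {set T}) : nat :=
  \sum_u \sum_v (fs e A u v : nat).

Definition tog (T : finType) (A : {set T}) (x : T) : {set T} :=
  if x \in A then A :\ x else x |: A.

Lemma in_tog (T : finType) (A : {set T}) x v :
  (v \in tog A x) = ((v \in A) != (v == x)).
Proof.
rewrite /tog; case xA: (x \in A).
  rewrite in_setD1; have [->|vx] := eqVneq v x; first by rewrite xA.
  by rewrite /= ?addbF ?andbT ?andTb; case: (v \in A).
rewrite in_setU1; have [->|vx] := eqVneq v x; first by rewrite xA.
by rewrite /= ?addbF ?andbT ?andTb; case: (v \in A).
Qed.

Lemma sumI (T : finType) (g : T -> T -> bool) x : g x x = false ->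
  \sum_u \sum_v ((((u == x) != (v == x)) && g u v) : nat)
  = \sum_v (g x v : nat) + \sum_u (g u x : nat).
Proof.
move=> gxx.
have pw : forall u v, ((((u == x) != (v == x)) && g u v) : nat)
   = ((u == x) && g u v : nat) + ((v == x) && g u v : nat).
  move=> u v; have [->|ux] := eqVneq u x; have [->|vx] := eqVneq v x => //=.
  - by rewrite gxx.
  - by rewrite addn0.
rewrite (eq_bigr (fun u => \sum_v ((u == x) && g u v : nat) + \sum_v ((v == x) && g u v : nat))); last first.
  by move=> u _; rewrite -big_split; apply: eq_bigr => v _; rewrite pw.
rewrite big_split /=; congr (_ + _).
  rewrite (bigD1 x) //= [X in _ + X]big1 ?addn0.
    by apply: eq_bigr => v _; rewrite eqxx.
  by move=> u ux; apply: big1 => v _; rewrite (negbTE ux).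
rewrite exchange_big (bigD1 x) //= [X in _ + X]big1 ?addn0.
  by apply: eq_bigr => v _; rewrite eqxx.
by move=> u ux; apply: big1 => v _; rewrite (negbTE ux).
Qed.

Lemma key (T : finType) (e : rel T) A x :
  mono e (tog A x) + (\sum_u \sum_v ((((u == x) != (v == x)) && fs e A u v) : nat)
                    + \sum_u \sum_v ((((u == x) != (v == x)) && fs e A u v) : nat))
  = mono e A + \sum_u \sum_v ((((u == x) != (v == x)) && e u v) : nat).
Proof.
rewrite /mono -!big_split; apply: eq_bigr => u _.
rewrite -!big_split; apply: eq_bigr => v _ /=.
rewrite /fs !in_tog.
by case: (u == x); case: (v == x); case: (u \in A); case: (v \in A); case: (e u v).
Qed.

Lemma card_sum (T : finType) (P : pred T) : \sum_v (P v : nat) = #|[set v | P v]|.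
Proof.
rewrite -sum1_card [RHS]big_mkcond /=; apply: eq_bigr => v _; rewrite inE.
by case: (P v).
Qed.

Theorem mainTheorem6 (T : finType) (e : rel T) :
  simple_graph e -> max_degree_le e 3 ->
  exists M : {set {set T}}, is_matching e M /\ contraction_bipartite e M.
Proof.
move=> [esym eirr] deg.
have fsym : forall A u v, fs e A u v = fs e A v u.
  by move=> A u v; rewrite /fs esym eq_sym.
case: (@arg_minnP _ set0 predT (mono e) isT) => A _ minA.
have s1 : forall x, \sum_v (fs e A x v : nat) <= 1.
  move=> x; rewrite leqNgt; apply/negP => s2.
  have h := key e A x.
  rewrite !sumI ?/fs ?eirr // -/(fs e A) in h.
  have E1 : \sum_u (e u x : nat) = \sum_u (e x u : nat) by apply: eq_bigr => u _; rewrite esym.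
  have E2 : \sum_u (fs e A u x : nat) = \sum_u (fs e A x u : nat) by apply: eq_bigr => u _; rewrite fsym.
  rewrite E1 E2 in h.
  have hd : \sum_v (e x v : nat) <= 3.
    by rewrite card_sum; exact: (deg x).
  have := minA (tog A x) isT; move: h.
  set s := \sum_v (fs e A x v : nat).
  set d := \sum_v (e x v : nat).
  lia.
have uniq2 : forall x y z, fs e A x y -> fs e A x z -> y = z.
  move=> x y z fy fz; apply/eqP; apply/negPn/negP => yz.
  have := s1 x; rewrite (bigD1 y) // (bigD1 z) /=; last by rewrite eq_sym yz.
  by rewrite fy fz.
pose M := [set S : {set T} | [exists u, exists v, fs e A u v && (S == [set u; v])]].
have inM : forall S, reflect (exists u v, fs e A u v /\ S = [set u; v]) (S \in M).
  move=> S; rewrite inE; apply: (iffP existsP).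
    by move=> [u /existsP [v /andP [f /eqP ->]]]; exists u, v.
  by move=> [u [v [f ->]]]; exists u; apply/existsP; exists v; rewrite f eqxx.
have inS : forall S w, S \in M -> w \in S -> exists p, fs e A w p /\ S = [set w; p].
  move=> S w /inM [u [v [f ->]]]; rewrite !inE => /orP [/eqP ->|/eqP ->].
    by exists v.
  by exists u; rewrite fsym setUC.
exists M; split.
  split.
    move=> S /inM [u [v [f ->]]]; exists u, v; split => //.
    by move: f => /andP [].
  move=> S1 S2 h1 h2 ne; rewrite -setI_eq0; apply/eqP/setP => w.
  rewrite !inE; apply/negP => /andP [w1 w2].
  have [p [fp E1]] := inS _ _ h1 w1.
  have [q [fq E2]] := inS _ _ h2 w2.
  by move: ne; rewrite E1 E2 (uniq2 _ _ _ fp fq) eqxx.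
exists (fun S : {set T} => [exists y in S, y \in A]); move=> /=.
have colE : forall u, [exists y in blk M u, y \in A] = (u \in A).
  move=> u; apply/idP/idP.
    move=> /existsP [y /andP [yb yA]]; move: yb yA; rewrite /blk !inE.
    case/orP => [/eqP -> //|/bigcupP [S /andP [SM uS] yS]].
    have [p [fp E]] := inS _ _ SM uS; move: yS; rewrite E !inE.
    case/orP => /eqP -> //.
    by move: fp => /andP [_ /eqP ->].
  by move=> uA; apply/existsP; exists u; rewrite /blk !inE eqxx.
move=> u v euv nM; rewrite !colE; apply/negP => /eqP same.
move/negP: nM; apply; apply/inM; exists u, v; split => //.
by rewrite /fs euv same eqxx.
Qed.
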